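(* Let $0\neq h\in\mathbb{F}[x]$, regard $A_h\subseteq A_1$ via $x\mapsto x$, $\hat y\mapsto yh$, and let $C_{A_h}(x)=\{a\in A_h: ax=xa\}$. (i) If $\mathrm{char}(\mathbb{F})=0$, then $C_{A_h}(x)=\mathbb{F}[x]$. (ii) If $\mathrm{char}(\mathbb{F})=p>0$, then: (a) $C_{A_h}(x)=\mathbb{F}[x,h^py^p]=\bigoplus_{i\equiv 0 \bmod p}\mathbb{F}[x]\,h^iy^i$; (b) $[x,A_h]=\bigoplus_{i\not\equiv -1\bmod p}h\,\mathbb{F}[x]\,h^iy^i=\bigoplus_{i=0}^{p-2}h\,C_{A_h}(x)\,h^iy^i$; (c) $[\hat y,A_h]=\bigoplus_{i\ge0}\mathrm{im}\!\left(\tfrac{d}{dx}\right)h\,\hat y^i=\bigoplus_{j\not\equiv -1\bmod p}h x^j\,\mathbb{F}[\hat y]$, where $\mathrm{im}(\tfrac{d}{dx})\subseteq\mathbb{F}[x]$ is the image of formal differentiation.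
   Context: For $h\in\mathbb{F}[x]$, $A_h$ is the unital associative $\mathbb{F}$-algebra generated by $x,\hat y$ with defining relation $\hat yx-x\hat y=h$. $A_1$ is the Weyl algebra, generated by $x,y$ with $yx-xy=1$; for $h\ne0$, $x\mapsto x,\ \hat y\mapsto yh$ embeds $A_h$ into $A_1$. For $b\in A_h$, $[b,A_h]=\{ba-ab:a\in A_h\}$. *)

(* Defs.v *)
From HB Require Import structures.
From mathcomp Require Import all_boot all_order all_algebra.
Set Implicit Arguments. Unset Strict Implicit. Unset Printing Implicit Defensive.
Import Order.TTheory GRing.Theory Num.Theory.
Local Open Scope ring_scope.

(* The Weyl algebra A_1 over a field F, represented by normal forms:
   an element sum_i f_i(x) y^i (f_i in F[x]) is the polynomial in an outer
   variable (standing for y) with coefficients f_i : {poly F}.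
   'X : {poly {poly F}} is y;  f%:P is the element f(x) of F[x] ⊆ A_1. *)
Notation weyl F := {poly {poly F}}.

(* Normal-ordered product, from  y^i g = sum_k C(i,k) g^(k) y^(i-k):
   (f y^i)(g y^j) = sum_{k<=i} C(i,k) f g^(k) y^(i+j-k). *)
Definition wmul (F : fieldType) (a b : weyl F) : weyl F :=
  \sum_(i < size a) \sum_(j < size b) \sum_(k < i.+1)
     ('C(i, k)%:R * a`_i * (b`_j)^`(k)) *: 'X^(i + j - k).

Definition wone (F : fieldType) : weyl F := 1.
Definition wexp (F : fieldType) (a : weyl F) (n : nat) : weyl F :=
  iter n (wmul a) (wone F).

Definition wx (F : fieldType) : weyl F := ('X : {poly F})%:P.
Definition wy (F : fieldType) : weyl F := 'X.
Definition yhat (F : fieldType) (h : {poly F}) : weyl F := wmul (wy F) h%:P.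

Inductive subalg_gen (F : fieldType) (S : weyl F -> Prop) : weyl F -> Prop :=
| sg_gen a : S a -> subalg_gen S a
| sg_const c : subalg_gen S (c%:P%:P)
| sg_add a b : subalg_gen S a -> subalg_gen S b -> subalg_gen S (a + b)
| sg_mul a b : subalg_gen S a -> subalg_gen S b -> subalg_gen S (wmul a b).

Definition in_Ah (F : fieldType) (h : {poly F}) : weyl F -> Prop :=
  subalg_gen (fun a => a = wx F \/ a = yhat h).

Definition in_CAhx (F : fieldType) (h : {poly F}) (a : weyl F) : Prop :=
  in_Ah h a /\ wmul a (wx F) = wmul (wx F) a.

Definition in_comm (F : fieldType) (h : {poly F}) (b c : weyl F) : Prop :=
  exists a, in_Ah h a /\ c = wmul b a - wmul a b.

(* Main.v *)
Require Import Defs.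
From HB Require Import structures.
From mathcomp Require Import all_boot all_order all_algebra.
Import Order.TTheory GRing.Theory Num.Theory.
Local Open Scope ring_scope.

From mathcomp Require Import ring.
Import GRing.Theory.
Set Implicit Arguments. Unset Strict Implicit. Unset Printing Implicit Defensive.

Section Weyl.
Variable F : fieldType.
Implicit Types a b c d : weyl F.
Implicit Types f g : {poly F}.

Definition Dy b : weyl F := \poly_(i < size b) (b`_i)^`().
Lemma coef_Dy b m : (Dy b)`_m = (b`_m)^`().
Proof.
rewrite coef_poly; case: ltnP => // H; by rewrite nth_default // deriv0.
Qed.
Lemma size_Dy b : (size (Dy b) <= size b)%N.
Proof. exact: size_poly. Qed.

Definition Ly b : weyl F := 'X * b + Dy b.
Definition Lyn n b := iter n Ly b.

Lemma LyD b c : Ly (b + c) = Ly b + Ly c.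
Proof. apply/polyP=> m; rewrite /Ly !(coefD, coef_Dy, derivD, coefXM). case: eqP=> _; ring. Qed.
Lemma Ly0 : Ly 0 = 0.
Proof. apply/polyP=> m; rewrite /Ly !(coefD, coef_Dy, coefXM, coef0, deriv0); case: eqP=>_; ring. Qed.
Lemma LyN b : Ly (- b) = - Ly b.
Proof. apply/polyP=> m; rewrite /Ly !(coefD, coefN, coef_Dy, coefXM, derivN); case: eqP=>_; ring. Qed.
Lemma LyZ f b : Ly (f *: b) = f *: Ly b + f^`() *: b.
Proof.
apply/polyP=> m; rewrite /Ly !(coefD, coefZ, coef_Dy, coefXM, derivM).
case: eqP=>_; ring.
Qed.
Lemma LynD n b c : Lyn n (b + c) = Lyn n b + Lyn n c.
Proof. elim: n => //= n IH; by rewrite IH LyD. Qed.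
Lemma Lyn0 n : Lyn n 0 = 0.
Proof. elim: n => //= n IH; by rewrite IH Ly0. Qed.
Lemma LynN n b : Lyn n (- b) = - Lyn n b.
Proof. elim: n => //= n IH; by rewrite IH LyN. Qed.
Lemma LynB n b c : Lyn n (b - c) = Lyn n b - Lyn n c.
Proof. by rewrite LynD LynN. Qed.
Lemma Lyn_sum n I (r : seq I) (P : pred I) (G : I -> weyl F) :
  Lyn n (\sum_(i <- r | P i) G i) = \sum_(i <- r | P i) Lyn n (G i).
Proof. exact: (big_morph _ (LynD n) (Lyn0 n)). Qed.
Lemma Ly_sum I (r : seq I) (P : pred I) (G : I -> weyl F) :
  Ly (\sum_(i <- r | P i) G i) = \sum_(i <- r | P i) Ly (G i).
Proof. exact: (big_morph _ LyD Ly0). Qed.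
Lemma LynS n b : Lyn n.+1 b = Ly (Lyn n b).
Proof. by []. Qed.

Lemma Dy_Xn n : Dy ('X^n) = 0.
Proof.
apply/polyP=> m; rewrite coef_Dy coefXn coef0.
case: eqP=> _; [exact: (derivC (1:F)) | exact: (derivC (0:F))].
Qed.
Lemma Ly_Xn n : Ly ('X^n) = 'X^(n.+1).
Proof. by rewrite /Ly Dy_Xn addr0 exprS. Qed.
Lemma Ly_mono f n : Ly (f *: 'X^n) = f *: 'X^(n.+1) + f^`() *: 'X^n.
Proof. by rewrite LyZ Ly_Xn. Qed.

Lemma Lyn_mono i g j : Lyn i (g *: 'X^j) =
  \sum_(k < i.+1) (g^`(k) *+ 'C(i,k)) *: 'X^(j + (i - k)).
Proof.
elim: i => [|i IH].
  by rewrite big_ord_recl big_ord0 addr0 /= mulr1n addn0.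
rewrite LynS IH Ly_sum.
under eq_bigr => k _ do rewrite Ly_mono derivMn -derivnS.
rewrite big_split /=.
rewrite [in RHS]big_ord_recl /= subn0 bin0 mulr1n.
under [in RHS]eq_bigr => k _ do rewrite /= subSS binS mulrnDr scalerDl.
rewrite big_split /= addrA; congr (_ + _).
rewrite big_ord_recl /= subn0 bin0 mulr1n addnS; congr (_ + _).
rewrite big_ord_recr /= bin_small // mulr0n scale0r addr0.
apply: eq_bigr => k _ /=.
have Hk : (k < i)%N by [].
by rewrite -addnS subnSK.
Qed.


Lemma poly_exp (b : weyl F) : b = \sum_(j < size b) b`_j *: 'X^j.
Proof. by rewrite -poly_def coefK. Qed.

Lemma wmulW a b : wmul a b = \sum_(i < size a) a`_i *: Lyn i b.
Proof.
rewrite /wmul; apply: eq_bigr => i _.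
have -> : Lyn i b = \sum_(j < size b) Lyn i (b`_j *: 'X^j).
  by rewrite -Lyn_sum -poly_exp.
rewrite scaler_sumr; apply: eq_bigr => j _.
rewrite Lyn_mono scaler_sumr; apply: eq_bigr => k _.
rewrite scalerA addnC -addnBA; last by rewrite -ltnS.
congr (_ *: _); rewrite -mulr_natl; ring.
Qed.

Lemma sum_widen (G : nat -> weyl F) a N : (size a <= N)%N ->
  \sum_(i < N) a`_i *: G i = \sum_(i < size a) a`_i *: G i.
Proof.
move=> H; rewrite (big_ord_widen N (fun i => a`_i *: G i) H) [RHS]big_mkcond /=.
apply: eq_bigr => i _; case: ltnP => // Hi; by rewrite nth_default // scale0r.
Qed.

Lemma wmulE N a b : (size a <= N)%N -> wmul a b = \sum_(i < N) a`_i *: Lyn i b.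
Proof. by move=> H; rewrite sum_widen // wmulW. Qed.

Lemma wmulDl a1 a2 b : wmul (a1 + a2) b = wmul a1 b + wmul a2 b.
Proof.
have H1 : (size a1 <= size a1 + size a2)%N by rewrite leq_addr.
have H2 : (size a2 <= size a1 + size a2)%N by rewrite leq_addl.
have H : (size (a1 + a2)%R <= size a1 + size a2)%N.
  by apply: leq_trans (size_polyD _ _) _; rewrite geq_max H1 H2.
rewrite !(wmulE _ H) (wmulE _ H1) (wmulE _ H2) -big_split /=.
by apply: eq_bigr => i _; rewrite coefD scalerDl.
Qed.
Lemma wmulZl f a b : wmul (f *: a) b = f *: wmul a b.
Proof.
rewrite (wmulE _ (size_scale_leq f a)) wmulW scaler_sumr.
by apply: eq_bigr => i _; rewrite coefZ scalerA.
Qed.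
Lemma wmul0l b : wmul 0 b = 0.
Proof. by rewrite wmulW size_poly0 big_ord0. Qed.
Lemma wmulNl a b : wmul (- a) b = - wmul a b.
Proof. by rewrite -scaleN1r wmulZl scaleN1r. Qed.
Lemma wmulBl a1 a2 b : wmul (a1 - a2) b = wmul a1 b - wmul a2 b.
Proof. by rewrite wmulDl wmulNl. Qed.
Lemma wmul_suml I (r : seq I) (P : pred I) (G : I -> weyl F) b :
  wmul (\sum_(i <- r | P i) G i) b = \sum_(i <- r | P i) wmul (G i) b.
Proof. exact: (big_morph (fun a => wmul a b) (fun x y => wmulDl x y b) (wmul0l b)). Qed.

Lemma wmulDr a b1 b2 : wmul a (b1 + b2) = wmul a b1 + wmul a b2.
Proof. rewrite !wmulW -big_split /=; apply: eq_bigr => i _; by rewrite LynD scalerDr. Qed.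
Lemma wmul0r a : wmul a 0 = 0.
Proof. rewrite wmulW big1 // => i _; by rewrite Lyn0 scaler0. Qed.
Lemma wmulNr a b : wmul a (- b) = - wmul a b.
Proof. rewrite !wmulW -sumrN; apply: eq_bigr => i _; by rewrite LynN scalerN. Qed.
Lemma wmulBr a b1 b2 : wmul a (b1 - b2) = wmul a b1 - wmul a b2.
Proof. by rewrite wmulDr wmulNr. Qed.
Lemma wmul_sumr I (r : seq I) (P : pred I) (G : I -> weyl F) a :
  wmul a (\sum_(i <- r | P i) G i) = \sum_(i <- r | P i) wmul a (G i).
Proof. exact: (big_morph (fun b => wmul a b) (wmulDr a) (wmul0r a)). Qed.

Lemma wmulXn f n b : wmul (f *: 'X^n) b = f *: Lyn n b.
Proof.
have H : (size (f *: 'X^n : weyl F) <= n.+1)%N.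
  by apply: leq_trans (size_scale_leq _ _) _; rewrite size_polyXn.
rewrite (wmulE _ H) big_ord_recr /= coefZ coefXn eqxx mulr1 big1 ?add0r //.
move=> i _; by rewrite coefZ coefXn (ltn_eqF (ltn_ord i)) mulr0 scale0r.
Qed.

Lemma wmul_Ly d c : wmul (Ly d) c = Ly (wmul d c).
Proof.
rewrite [Ly d]/Ly wmulDl.
have -> : 'X * d = \sum_(i < size d) d`_i *: 'X^(i.+1).
  rewrite {1}(poly_exp d) mulr_sumr; apply: eq_bigr => i _.
  by rewrite -scalerAr exprS.
rewrite wmul_suml (wmulE _ (size_Dy d)) [in RHS]wmulW Ly_sum -big_split /=.
apply: eq_bigr => i _; by rewrite wmulXn LyZ coef_Dy.
Qed.

Lemma wmul_Lyn n d c : wmul (Lyn n d) c = Lyn n (wmul d c).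
Proof. elim: n => //= n IH; by rewrite wmul_Ly IH. Qed.

Lemma wmulA a b c : wmul (wmul a b) c = wmul a (wmul b c).
Proof.
rewrite [wmul a b]wmulW wmul_suml [in RHS]wmulW; apply: eq_bigr => i _.
by rewrite wmulZl wmul_Lyn.
Qed.


Lemma polyC_X0 f : (f%:P : weyl F) = f *: 'X^0.
Proof. by rewrite expr0 -mul_polyC mulr1. Qed.

Lemma wmulCl f b : wmul (f%:P) b = f *: b.
Proof. by rewrite polyC_X0 wmulXn. Qed.

Lemma wmulCC f g : wmul (f%:P) (g%:P) = (f * g)%:P.
Proof. by rewrite wmulCl -mul_polyC polyCM. Qed.

Lemma wmul1l b : wmul (1 : weyl F) b = b.
Proof. by rewrite -polyC1 wmulCl scale1r. Qed.

Lemma Dy_C f : Dy (f%:P) = (f^`())%:P.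
Proof.
apply/polyP=> m; rewrite coef_Dy !coefC; case: eqP => _ //; exact: deriv0.
Qed.

Definition xx : {poly F} := 'X.

Lemma Lyn_x i : Lyn i ((xx)%:P) = xx *: 'X^i + ('X^i)^`().
Proof.
elim: i => [|i IH]; first by rewrite /= expr0 -polyC1 derivC addr0 -mul_polyC mulr1.
rewrite LynS IH LyD Ly_mono derivX scale1r.
case: i {IH} => [|n]; first by rewrite !derivXn /= mulr0n Ly0 addr0 mulr1n.
rewrite !derivXn /= -scaler_nat LyZ Ly_Xn.
have -> : ((n.+1)%:R : {poly F})^`() = 0 by rewrite derivMn derivC mul0rn.
by rewrite scale0r addr0 scaler_nat -addrA -mulrS.
Qed.

Lemma deriv_sum I (r : seq I) (P : pred I) (G : I -> weyl F) :
  (\sum_(i <- r | P i) G i)^`() = \sum_(i <- r | P i) (G i)^`().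
Proof. exact: (big_morph _ (@derivD _) (@deriv0 _)). Qed.

Lemma wmul_x a : wmul a (wx F) = wmul (wx F) a + a^`().
Proof.
rewrite /wx -/xx wmulCl wmulW.
transitivity (xx *: (\sum_(j<size a) a`_j *: 'X^j) + (\sum_(j<size a) a`_j *: 'X^j)^`());
  last by rewrite -poly_exp.
rewrite deriv_sum scaler_sumr -big_split /=.
apply: eq_bigr => i _; rewrite Lyn_x scalerDr derivZ !scalerA mulrC //.
Qed.


Variable h : {poly F}.

Definition Inv a := forall i, h ^+ i %| a`_i.
Definition InvS s d := forall m, h ^+ (m - s) %| d`_m.

Lemma dvdp_deriv n g : h ^+ n %| g -> h ^+ n.-1 %| g^`().
Proof.
case: n => [|n] /=; first by move=> _; rewrite expr0 dvd1p.
case/dvdpP => q ->; rewrite derivM deriv_exp /=.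
apply: dvdp_add; first by apply: dvdp_mull; apply: dvdp_exp2l.
apply: dvdp_mull; rewrite -mulr_natl; apply: dvdp_mull; exact: dvdp_mull (dvdpp _).
Qed.

Lemma InvS_Ly s d : InvS s d -> InvS s.+1 (Ly d).
Proof.
move=> H m; rewrite /Ly coefD coefXM coef_Dy; apply: dvdp_add.
  case: m => [|m] /=; first exact: dvdp0.
  by rewrite subSS.
by rewrite subnS; apply: dvdp_deriv.
Qed.

Lemma InvS_Lyn i b : Inv b -> InvS i (Lyn i b).
Proof.
move=> H; elim: i => [|i IH]; last exact: InvS_Ly.
by move=> m; rewrite subn0.
Qed.

Lemma Inv0 : Inv 0.
Proof. by move=> i; rewrite coef0 dvdp0. Qed.
Lemma InvD a b : Inv a -> Inv b -> Inv (a + b).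
Proof. by move=> Ha Hb i; rewrite coefD dvdp_add. Qed.
Lemma InvZ f a : Inv a -> Inv (f *: a).
Proof. by move=> Ha i; rewrite coefZ dvdp_mull. Qed.
Lemma InvN a : Inv a -> Inv (- a).
Proof. by move=> Ha; rewrite -scaleN1r; apply: InvZ. Qed.
Lemma InvB a b : Inv a -> Inv b -> Inv (a - b).
Proof. by move=> Ha Hb; apply: InvD => //; apply: InvN. Qed.
Lemma Inv_sum I (r : seq I) (P : pred I) (G : I -> weyl F) :
  (forall i, P i -> Inv (G i)) -> Inv (\sum_(i <- r | P i) G i).
Proof. by move=> H; apply: big_ind => //; [exact: Inv0 | exact: InvD]. Qed.
Lemma InvC f : Inv (f%:P).
Proof. by move=> [|i]; rewrite coefC /= ?dvd1p ?dvdp0. Qed.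

Lemma Inv_wmul a b : Inv a -> Inv b -> Inv (wmul a b).
Proof.
move=> Ha Hb; rewrite wmulW; apply: Inv_sum => i _ m.
rewrite coefZ.
have Hm : (m <= i + (m - i))%N by rewrite -leq_subLR.
apply: dvdp_trans (dvdp_exp2l h Hm) _.
by rewrite exprD; apply: dvdp_mul => //; apply: InvS_Lyn.
Qed.

Lemma Inv_wx : Inv (wx F).
Proof. exact: InvC. Qed.

Lemma yhatE : yhat h = h *: 'X + (h^`())%:P.
Proof.
rewrite /yhat (_ : wy F = 1 *: 'X^1); last by rewrite scale1r expr1.
rewrite wmulXn scale1r /= /Ly Dy_C.
by rewrite mulrC mul_polyC.
Qed.

Lemma Inv_yhat : Inv (yhat h).
Proof.
rewrite yhatE; apply: InvD; last exact: InvC.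
move=> [|[|i]]; rewrite coefZ coefX /= ?mulr0 ?dvdp0 //.
by rewrite mulr1 expr1.
Qed.

Lemma Ah_Inv a : in_Ah h a -> Inv a.
Proof.
elim => [x [->|->]| c | x y _ Hx _ Hy | x y _ Hx _ Hy].
- exact: Inv_wx.
- exact: Inv_yhat.
- exact: InvC.
- exact: InvD.
- exact: Inv_wmul.
Qed.


Notation Y := (yhat h).
Definition Ypow n := wexp Y n.

Lemma wmulY b : wmul Y b = h *: Ly b + h^`() *: b.
Proof.
have E : (h *: 'X : weyl F) = h *: 'X^1 by rewrite expr1.
by rewrite yhatE wmulDl E wmulXn wmulCl. Qed.

Lemma YpowS n : Ypow n.+1 = wmul Y (Ypow n).
Proof. by []. Qed.

Lemma wone1 : wone F = (1%:P)%:P.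
Proof. by rewrite !polyC1. Qed.

Lemma Ypow_Ah n : in_Ah h (Ypow n).
Proof.
elim: n => [|n IH]; first by rewrite /Ypow /= wone1; apply: sg_const.
rewrite YpowS; apply: sg_mul => //; apply: sg_gen; by right.
Qed.

Lemma coef_wmulY b m : (wmul Y b)`_m =
  h * ((if m == 0%N then 0 else b`_m.-1) + (b`_m)^`()) + h^`() * b`_m.
Proof. by rewrite wmulY !(coefD, coefZ, coefXM, coef_Dy). Qed.

Lemma Ypow_coef n : (size (Ypow n) <= n.+1)%N /\ (Ypow n)`_n = h ^+ n.
Proof.
elim: n => [|n [IH1 IH2]].
  by rewrite /Ypow /= /wone size_poly1 coefC /= expr0.
have Z : forall j, (n.+1 <= j)%N -> (Ypow n)`_j = 0 by apply/leq_sizeP.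
split.
  apply/leq_sizeP => j Hj; rewrite YpowS coef_wmulY.
  case: j Hj => [|j] Hj //=.
  by rewrite Z // Z ?(ltnW Hj) // deriv0 addr0 mulr0 mulr0 addr0.
by rewrite YpowS coef_wmulY /= IH2 Z // deriv0 addr0 mulr0 addr0 exprS.
Qed.

Lemma polyC_gen (S : weyl F -> Prop) f : S (wx F) -> subalg_gen S (f%:P).
Proof.
move=> HS; elim/poly_ind: f => [|p c IH]; first by rewrite -polyC0; apply: sg_const.
rewrite polyCD -wmulCC; apply: sg_add; last exact: sg_const.
by apply: sg_mul => //; apply: sg_gen.
Qed.

Lemma Ah_polyC f : in_Ah h (f%:P).
Proof. by apply: polyC_gen; left. Qed.

Lemma Ah_scale f b : in_Ah h b -> in_Ah h (f *: b).
Proof. by move=> Hb; rewrite -wmulCl; apply: sg_mul => //; exact: Ah_polyC. Qed.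

Lemma Ah_sum I (r : seq I) (P : pred I) (G : I -> weyl F) :
  (forall i, P i -> in_Ah h (G i)) -> in_Ah h (\sum_(i <- r | P i) G i).
Proof.
move=> H; apply: big_ind => //; last by move=> x y; apply: sg_add.
by rewrite -polyC0 -polyC0; apply: sg_const.
Qed.

Lemma Inv_decomp N a : (size a <= N)%N -> Inv a ->
  exists f : nat -> {poly F}, a = \sum_(i < N) f i *: Ypow i.
Proof.
elim: N a => [|N IH] a Hs Ha.
  exists (fun _ => 0); move: Hs; rewrite leqn0 size_poly_eq0 => /eqP ->.
  by rewrite big_ord0.
set g := a`_N %/ h ^+ N.
have Hg : a`_N = g * h ^+ N by rewrite divpK.
have [Y1 Y2] := Ypow_coef N.
have Za : forall j, (N.+1 <= j)%N -> a`_j = 0 by apply/leq_sizeP.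
have ZY : forall j, (N.+1 <= j)%N -> (Ypow N)`_j = 0 by apply/leq_sizeP.
set r := a - g *: Ypow N.
have Hr : (size r <= N)%N.
  apply/leq_sizeP => j Hj; rewrite coefB coefZ.
  case: (ltngtP j N) => [|Hj2|->]; first by rewrite ltnNge Hj.
    by rewrite Za // ZY // mulr0 subr0.
  by rewrite Y2 -Hg subrr.
have Ir : Inv r by apply: InvB => //; apply: InvZ; apply: Ah_Inv; apply: Ypow_Ah.
have [f Hf] := IH r Hr Ir.
exists (fun i => if i == N then g else f i).
rewrite big_ord_recr /= eqxx.
have -> : \sum_(i < N) (if (widen_ord (leqnSn N) i == N :> nat) then g else f i) *: Ypow i
   = \sum_(i < N) f i *: Ypow i.
  by apply: eq_bigr => i _ /=; rewrite (ltn_eqF (ltn_ord i)).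
by rewrite -Hf /r subrK.
Qed.

Lemma Inv_Ah a : Inv a -> in_Ah h a.
Proof.
move=> Ha; have [f ->] := Inv_decomp (leqnn _) Ha.
by apply: Ah_sum => i _; apply: Ah_scale; apply: Ypow_Ah.
Qed.

Lemma Ah_iff a : in_Ah h a <-> Inv a.
Proof. by split; [apply: Ah_Inv | apply: Inv_Ah]. Qed.


Definition Cx a := wmul a (wx F) = wmul (wx F) a.

Lemma Cx_deriv a : Cx a <-> a^`() = 0.
Proof.
rewrite /Cx wmul_x; split => [H|->]; last by rewrite addr0.
by apply: (addrI (wmul (wx F) a)); rewrite addr0.
Qed.

Lemma CAhx_iff a : in_CAhx h a <-> Inv a /\ a^`() = 0.
Proof.
rewrite /in_CAhx Ah_iff; split => [[H1 H2]|[H1 H2]]; split => //; by apply/Cx_deriv.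
Qed.

Lemma Cx_wmul a b : Cx a -> Cx b -> Cx (wmul a b).
Proof. by move=> Ha Hb; rewrite /Cx wmulA Hb -wmulA Ha wmulA. Qed.

Lemma part_i : [pchar F] =i pred0 ->
  forall a : weyl F, in_CAhx h a <-> exists f : {poly F}, a = f%:P.
Proof.
move=> H0 a; rewrite CAhx_iff; split.
  move=> [_ Hd]; exists a`_0; apply/polyP => [[|m]]; rewrite coefC //=.
  have := congr1 (fun q : weyl F => q`_m) Hd; rewrite coef_deriv coef0.
  move/eqP; rewrite -mulr_natr -polyC_natr mulf_eq0 polyC_eq0.
  have -> : ((m.+1)%:R == 0 :> F) = false by rewrite (proj1 (pcharf0P F) H0).
  by rewrite orbF => /eqP.
by move=> [f ->]; split; [exact: InvC | exact: derivC].
Qed.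


Lemma Lyn_Xn i j : Lyn i ('X^j) = 'X^(i + j).
Proof. elim: i => //= i IH; by rewrite IH Ly_Xn. Qed.

Lemma wmul_Xn c i : wmul c ('X^i) = c * 'X^i.
Proof.
rewrite wmulW [in RHS](poly_exp c) mulr_suml; apply: eq_bigr => j _.
by rewrite Lyn_Xn exprD scalerAl.
Qed.

Variable p : nat.
Hypothesis Hp : p \in [pchar F].

Lemma p_prime : prime p. Proof. exact: pcharf_prime Hp. Qed.
Lemma p_gt0 : (0 < p)%N. Proof. exact: prime_gt0 p_prime. Qed.

Lemma mulrn_p (x : F) n : (p %| n)%N -> x *+ n = 0.
Proof. by move=> H; rewrite -mulr_natr; move: H; rewrite (dvdn_pcharf Hp) => /eqP ->; rewrite mulr0. Qed.

Lemma polyrn_p (q : {poly F}) n : (p %| n)%N -> q *+ n = 0.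
Proof. by move=> H; apply/polyP => i; rewrite coefMn coef0 mulrn_p. Qed.

Lemma weylrn_p (q : weyl F) n : (p %| n)%N -> q *+ n = 0.
Proof. by move=> H; apply/polyP => i; rewrite coefMn coef0 polyrn_p. Qed.

Lemma polyrn_eq0 (q : {poly F}) n : (q *+ n == 0) = (p %| n)%N || (q == 0).
Proof.
by rewrite -mulr_natr -polyC_natr mulf_eq0 polyC_eq0 -(dvdn_pcharf Hp) orbC.
Qed.

Lemma derivn_p g : g^`(p) = 0.
Proof.
apply/polyP => i; rewrite coef_derivn coef0 mulrn_p // -bin_ffact.
apply: dvdn_mull; apply: dvdn_fact; by rewrite p_gt0 leqnn.
Qed.

Lemma Lyn_p_mono g j : Lyn p (g *: 'X^j) = g *: 'X^(j + p).
Proof.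
rewrite Lyn_mono big_ord_recl /= bin0 mulr1n subn0 big1 ?addr0 // => k _ /=.
case: (ltngtP k.+1 p) => Hk.
- rewrite polyrn_p ?scale0r //; apply: prime_dvd_bin; first exact: p_prime.
  by rewrite Hk.
- by move: (ltn_ord k); rewrite ltnNge -ltnS Hk.
- have E : (g^`(0+k))^`() = 0 by rewrite add0n -derivnS Hk derivn_p.
  by rewrite E mul0rn scale0r.
Qed.

Lemma Lyn_p d : Lyn p d = 'X^p * d.
Proof.
rewrite [in LHS](poly_exp d) Lyn_sum [in RHS](poly_exp d) mulr_sumr; apply: eq_bigr => j _.
by rewrite Lyn_p_mono -scalerAr -exprD addnC.
Qed.

Lemma Lyn_pt t d : Lyn (p * t) d = 'X^(p * t) * d.
Proof.
elim: t d => [|t IH] d; first by rewrite muln0 expr0 mul1r.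
rewrite mulnS /Lyn iterD; change (Lyn p (Lyn (p*t) d) = 'X^(p + p*t) * d).
by rewrite IH Lyn_p mulrA -exprD.
Qed.

Definition Qp a := forall j, ~~ (p %| j)%N -> a`_j = 0.

Lemma deriv_Q a : a^`() = 0 <-> Qp a.
Proof.
split => [H j Hj|H].
  case: j Hj => [|j] Hj; first by rewrite dvdn0 in Hj.
  have := congr1 (fun q : weyl F => q`_j) H; rewrite coef_deriv coef0 => /eqP.
  by rewrite polyrn_eq0 (negbTE Hj) => /eqP.
apply/polyP => j; rewrite coef_deriv coef0.
case: (boolP (p %| j.+1)%N) => Hj; first exact: polyrn_p.
by rewrite H // mul0rn.
Qed.

Lemma CAhx_iffQ a : in_CAhx h a <-> Inv a /\ Qp a.
Proof. rewrite CAhx_iff; split => [[H1 H2]|[H1 H2]]; split => //; exact/deriv_Q. Qed.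

Lemma wmulQC c g : Qp c -> wmul c (g%:P) = g *: c.
Proof.
move=> Hc; rewrite wmulW [in RHS](poly_exp c) scaler_sumr; apply: eq_bigr => i _.
case: (boolP (p %| i)%N) => Hi; last by rewrite Hc // !scale0r scaler0.
rewrite -(divnK Hi) mulnC Lyn_pt -(divnK Hi) mulnC.
by rewrite polyC_X0 -scalerAr -exprD addn0 !scalerA mulrC.
Qed.


Lemma sum_form (P : pred nat) (w : nat -> {poly F})
  (T : {poly F} -> nat -> {poly F}) (HT : forall g i, T g i = g * w i) b :
  (exists n (f : nat -> {poly F}), b = \sum_(i < n | P i) T (f i) i *: 'X^i) <->
  (forall m, (~~ P m -> b`_m = 0) /\ w m %| b`_m).
Proof.
split.
  move=> [n [f ->]] m; rewrite coef_sum.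
  apply: (big_ind (fun x => (~~ P m -> x = 0) /\ w m %| x)).
  - by split => //; exact: dvdp0.
  - move=> x y [H1 H2] [H3 H4]; split; last exact: dvdp_add.
    by move=> Hm; rewrite H1 // H3 // addr0.
  - move=> i Pi; rewrite coefZ coefXn HT; case: eqP => [Ei|_].
      rewrite mulr1 Ei; split; first by rewrite Pi.
      exact: dvdp_mull (dvdpp _).
    by rewrite mulr0; split => //; exact: dvdp0.
move=> H; exists (size b), (fun i => b`_i %/ w i).
transitivity (\sum_(i < size b) b`_i *: 'X^i); first exact: poly_exp.
rewrite [RHS]big_mkcond; apply: eq_bigr => i _; case: (boolP (P i)) => Pi.
  by rewrite HT divpK // (proj2 (H i)).
by rewrite (proj1 (H i)) // scale0r.
Qed.

Notation zz := ((h ^+ p) *: 'X^p : weyl F).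
Notation Sz := (fun b : weyl F => b = wx F \/ b = zz).

Definition zpow t := iter t (wmul zz) (wone F).

Lemma zpowE t : zpow t = h ^+ (p * t) *: 'X^(p * t).
Proof.
elim: t => [|t IH]; first by rewrite /zpow /= /wone muln0 !expr0 scale1r.
rewrite /zpow iterS -/(zpow t) IH wmulXn Lyn_p -scalerAr scalerA -!exprD.
by rewrite mulnS.
Qed.

Lemma zpow_gen t : subalg_gen Sz (zpow t).
Proof.
elim: t => [|t IH]; first by rewrite /zpow /= wone1; apply: sg_const.
rewrite /zpow iterS; apply: sg_mul => //; apply: sg_gen; by right.
Qed.

Lemma gen_sub_IQ a : subalg_gen Sz a -> Inv a /\ Cx a.
Proof.
elim => [x [->|->]| c | x y _ [Ix Cx'] _ [Iy Cy] | x y _ [Ix Cx'] _ [Iy Cy]].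
- by split; [exact: Inv_wx | ].
- split.
    move=> i; rewrite coefZ coefXn; case: eqP => [->|_]; last by rewrite mulr0 dvdp0.
    by rewrite mulr1.
  by apply/Cx_deriv; rewrite derivZ derivXn weylrn_p // scaler0.
- by split; [exact: InvC | apply/Cx_deriv; exact: derivC].
- split; first exact: InvD.
  by move/Cx_deriv: Cx'; move/Cx_deriv: Cy => Hy Hx; apply/Cx_deriv; rewrite derivD Hx Hy addr0.
- by split; [exact: Inv_wmul | exact: Cx_wmul].
Qed.

Lemma IQ_gen N a : (size a <= N)%N -> Inv a -> Qp a -> subalg_gen Sz a.
Proof.
elim: N a => [|N IH] a Hs Ha Hq.
  move: Hs; rewrite leqn0 size_poly_eq0 => /eqP ->.
  by rewrite -polyC0 -polyC0; apply: sg_const.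
have Za : forall j, (N.+1 <= j)%N -> a`_j = 0 by apply/leq_sizeP.
case: (boolP (p %| N)%N) => HN; last first.
  apply: IH => //; apply/leq_sizeP => j; rewrite leq_eqVlt => /orP [/eqP <-|Hj].
    exact: Hq.
  exact: Za.
set t := (N %/ p)%N.
have Nt : N = (p * t)%N by rewrite mulnC divnK.
set g := a`_N %/ h ^+ N.
have Hg : a`_N = g * h ^+ N by rewrite divpK.
set r := a - g *: zpow t.
have Er : forall j, r`_j = if j == N then 0 else a`_j.
  move=> j; rewrite /r coefB coefZ zpowE -Nt coefZ coefXn.
  case: eqP => [->|_]; first by rewrite /= mulr1 -Hg subrr.
  by rewrite !mulr0 subr0.
have Hr : (size r <= N)%N.
  apply/leq_sizeP => j Hj; rewrite Er; case: eqP => // Hne.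
  by apply: Za; rewrite ltn_neqAle Hj andbT; apply/eqP => E; apply: Hne.
have Ir : Inv r.
  by apply: InvB => //; apply: InvZ; rewrite zpowE -Nt => i; rewrite coefZ coefXn;
     case: eqP => [->|_]; [rewrite mulr1 | rewrite mulr0 dvdp0].
have Qr : Qp r by move=> j Hj; rewrite Er; case: eqP => // _; exact: Hq.
have -> : a = r + wmul (g%:P) (zpow t) by rewrite wmulCl /r subrK.
apply: sg_add; first exact: IH.
by apply: sg_mul; [apply: polyC_gen; left | exact: zpow_gen].
Qed.

Lemma part_a1 a : in_CAhx h a <-> subalg_gen Sz a.
Proof.
split.
  by move/CAhx_iffQ => [H1 H2]; apply: (IQ_gen (leqnn _)).
move/gen_sub_IQ => [H1 H2]; apply/CAhx_iff; split => //; exact/Cx_deriv.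
Qed.

Lemma part_a2 a : in_CAhx h a <->
  exists (n : nat) (f : nat -> {poly F}),
    a = \sum_(i < n | (p %| i)%N) (f i * h ^+ i) *: 'X^i.
Proof.
rewrite CAhx_iffQ.
rewrite (@sum_form (fun i => (p %| i)%N) (fun i => h ^+ i)
          (fun g i => g * h ^+ i) (fun g i => erefl)).
split => [[H1 H2] m|H]; first by split; [exact: H2 | exact: H1].
by split => m; [exact: (proj2 (H m)) | exact: (proj1 (H m))].
Qed.


Definition Sb b := forall m, ((p %| m.+1)%N -> b`_m = 0) /\ h ^+ m.+1 %| b`_m.

Lemma comm_x_iff b : in_comm h (wx F) b <-> exists a, Inv a /\ b = - a^`().
Proof.
split => [[a [Ha ->]]|[a [Ha ->]]]; exists a; rewrite ?Ah_iff wmul_x opprD addrA subrr add0r; split => //; exact/Ah_iff.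
Qed.

Lemma Sb_deriv b : Sb b <-> exists a, Inv a /\ b = - a^`().
Proof.
split; last first.
  move=> [a [Ia ->]] m; rewrite coefN coef_deriv; split.
    by move=> H; rewrite polyrn_p // oppr0.
  by rewrite -mulr_natr -mulrN; apply: dvdp_mulr.
move=> H.
exists (\poly_(i < (size b).+1) (if i is j.+1 then - (((j.+1)%:R : F)^-1 *: b`_j) else 0)).
split.
  move=> i; rewrite coef_poly; case: ltnP => _; last exact: dvdp0.
  case: i => [|j]; first exact: dvdp0.
  rewrite -scaleNr -mul_polyC; apply: dvdp_mull; exact: (proj2 (H j)).
apply/polyP => m; rewrite coefN coef_deriv coef_poly ltnS.
case: ltnP => Hm; last by rewrite mul0rn oppr0 nth_default.
rewrite mulNrn opprK scalerMnl.
case: (boolP (p %| m.+1)%N) => Hpm; first by rewrite (proj1 (H m)) // scaler0.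
rewrite -mulr_natr mulVf ?scale1r //.
by rewrite -(dvdn_pcharf Hp).
Qed.

Lemma part_b1 b : in_comm h (wx F) b <->
  exists (n : nat) (f : nat -> {poly F}),
    b = \sum_(i < n | ~~ (p %| i.+1)%N) (h * f i * h ^+ i) *: 'X^i.
Proof.
rewrite comm_x_iff -Sb_deriv.
rewrite (@sum_form (fun i => ~~ (p %| i.+1)%N) (fun i => h ^+ i.+1)
          (fun g i => h * g * h ^+ i)); last by move=> g i; rewrite exprS; ring.
by split => H m; have [H1 H2] := H m; split => //; rewrite ?negbK; [exact: H1|move=> X; apply: H1; rewrite negbK].
Qed.

Lemma Sb0 : Sb 0.
Proof. by move=> m; rewrite coef0; split => //; exact: dvdp0. Qed.
Lemma SbD a b : Sb a -> Sb b -> Sb (a + b).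
Proof.
move=> Ha Hb m; have [A1 A2] := Ha m; have [B1 B2] := Hb m; rewrite coefD; split.
  by move=> H; rewrite A1 // B1 // addr0.
exact: dvdp_add.
Qed.

Lemma term_b c g i : Qp c ->
  wmul (wmul (h%:P) c) (g *: 'X^i) = (h * g) *: (c * 'X^i).
Proof.
move=> Hc; rewrite wmulCl (_ : g *: 'X^i = wmul g%:P ('X^i)); last by rewrite wmulCl.
rewrite -wmulA wmulZl wmulQC // !wmulZl wmul_Xn.
by rewrite scalerA mulrC.
Qed.


Hypothesis hnz : h != 0.

Definition cb b i : weyl F :=
  \poly_(j < size b) (if (p %| j)%N then b`_(j + i) %/ h ^+ i.+1 else 0).

Lemma cb_Q b i : Qp (cb b i).
Proof. by move=> j Hj; rewrite coef_poly; case: ltnP => // _; rewrite (negbTE Hj). Qed.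

Lemma cb_Inv b i : Sb b -> Inv (cb b i).
Proof.
move=> H j; rewrite coef_poly; case: ltnP => _; last exact: dvdp0.
case: ifP => _; last exact: dvdp0.
have /dvdpP [q Hq] := proj2 (H (j + i)%N).
rewrite Hq -addnS exprD mulrA mulpK ?expf_neq0 //.
exact: dvdp_mull (dvdpp _).
Qed.

Lemma part_b2 b : in_comm h (wx F) b <->
  exists c : nat -> weyl F,
    (forall i, in_CAhx h (c i)) /\
    b = \sum_(i < p.-1) wmul (wmul h%:P (c i)) ((h ^+ i) *: 'X^i).
Proof.
rewrite comm_x_iff -Sb_deriv; split; last first.
  move=> [c [Hc ->]]; apply: big_ind; [exact: Sb0 | exact: SbD | ].
  move=> i _; have [Ic Qc] := proj1 (CAhx_iffQ _) (Hc i).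
  rewrite term_b // => m; rewrite coefZ coefMXn.
  case: ltnP => Him; first by rewrite mulr0; split => //; exact: dvdp0.
  split.
    move=> Hpm; rewrite Qc ?mulr0 //; apply/negP => Hd.
    have E : m.+1 = ((m - i) + i.+1)%N by rewrite addnS subnK.
    rewrite E dvdn_addr // in Hpm.
    have := dvdn_leq (ltn0Sn _) Hpm.
    have := ltn_ord i; rewrite -ltnS prednK ?p_gt0 // => A B.
    by move: (leq_trans A B); rewrite ltnn.
  have E2 : h ^+ m.+1 = (h * h ^+ i) * h ^+ (m - i) by rewrite -exprS -exprD addSn subnKC.
  by rewrite E2; apply: dvdp_mul (dvdpp _) (Ic _).
move=> H; exists (cb b); split.
  by move=> i; apply/CAhx_iffQ; split; [exact: cb_Inv | exact: cb_Q].
apply/polyP => m; rewrite coef_sum.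
have T : forall i : 'I_(p.-1), (wmul (wmul h%:P (cb b i)) (h ^+ i *: 'X^i))`_m =
    if (i <= m)%N && (p %| m - i)%N then b`_m else 0.
  move=> i; rewrite term_b; last exact: cb_Q.
  rewrite coefZ coefMXn.
  case: ltnP => Him /=; first by rewrite mulr0.
  rewrite coef_poly; case: (ltnP (m - i) (size b)) => Hs.
    case: ifP => Hd; last by rewrite mulr0.
    rewrite subnK // -exprS mulrC divpK //.
    apply: dvdp_trans (dvdp_exp2l h (_ : (i.+1 <= m.+1)%N)) (proj2 (H m)).
    by rewrite ltnS.
  by rewrite mulr0 (nth_default _ (leq_trans Hs (leq_subr i m))) if_same.
rewrite (eq_bigr _ (fun i _ => T i)).
case: (eqVneq b`_m 0) => Hbm.
  by rewrite Hbm big1 // => i _; rewrite if_same.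
have Hpm : ~~ (p %| m.+1)%N.
  by apply/negP => X; move: Hbm; rewrite (proj1 (H m) X) eqxx.
have Hi0 : (m %% p < p.-1)%N.
  have L : (m %% p < p)%N by rewrite ltn_pmod // p_gt0.
  rewrite ltn_neqAle -ltnS prednK ?p_gt0 // L andbT; apply/eqP => E.
  move: Hpm; rewrite /dvdn -addn1 -modnDml E addn1 prednK ?p_gt0 // modnn.
  by [].
rewrite (bigD1 (Ordinal Hi0)) //= leq_mod /=.
have -> : (p %| m - m %% p)%N by rewrite {1}(divn_eq m p) addnK dvdn_mull.
rewrite big1 ?addr0 // => i Hne.
case: andP => // [[Him Hd]]; exfalso; move/eqP: Hne; apply; apply: val_inj => /=.
have E : m = ((m - i) %/ p * p + i)%N by rewrite divnK // subnK.
rewrite [in RHS]E modnMDl modn_small //.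
exact: leq_trans (ltn_ord i) (leq_pred p).
Qed.


Lemma wmul1r a : wmul a 1 = a.
Proof. by have := wmul_Xn a 0; rewrite expr0 mulr1. Qed.

Lemma Ypow_comm n : wmul (Ypow n) Y = Ypow n.+1.
Proof.
elim: n => [|n IH]; first by rewrite /Ypow /= /wone wmul1l wmul1r.
by rewrite YpowS wmulA IH.
Qed.

Lemma commYC f : wmul Y (f%:P) - wmul (f%:P) Y = (h * f^`())%:P.
Proof.
rewrite wmulY wmulCl yhatE /Ly Dy_C.
apply/polyP => j; rewrite !(coefB, coefD, coefN, coefZ, coefC, coefXM, coefX).
case: j => [|[|j]] /=; ring.
Qed.

Lemma comm_Y_term f i :
  wmul Y (f *: Ypow i) - wmul (f *: Ypow i) Y = (h * f^`()) *: Ypow i.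
Proof.
rewrite -!wmulCl -[wmul Y (wmul _ _)]wmulA [wmul (wmul (f%:P) _) Y]wmulA Ypow_comm YpowS.
rewrite -[wmul (f%:P) (wmul Y _)]wmulA -wmulBl commYC.
by rewrite wmulCl.
Qed.

Lemma comm_Y_sum n (f : nat -> {poly F}) :
  wmul Y (\sum_(i < n) f i *: Ypow i) - wmul (\sum_(i < n) f i *: Ypow i) Y =
  \sum_(i < n) (h * (f i)^`()) *: Ypow i.
Proof.
rewrite wmul_sumr wmul_suml -sumrB; apply: eq_bigr => i _; exact: comm_Y_term.
Qed.

Lemma part_c1 b : in_comm h Y b <->
  exists (n : nat) (g : nat -> {poly F}),
    b = \sum_(i < n) wmul (((g i)^`() * h)%:P) (wexp Y i).
Proof.
split.
  move=> [a [Ha ->]]; have [f Hf] := Inv_decomp (leqnn _) (Ah_Inv Ha).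
  move: Hf; move: (size a) => N Hf; exists N, f; rewrite Hf comm_Y_sum; apply: eq_bigr => i _.
  by rewrite wmulCl mulrC.
move=> [n [g ->]]; exists (\sum_(i < n) g i *: Ypow i); split.
  by apply: Ah_sum => i _; apply: Ah_scale; apply: Ypow_Ah.
rewrite comm_Y_sum; apply: eq_bigr => i _; by rewrite wmulCl mulrC.
Qed.


Lemma pexpN (q : {poly F}) N : (size q <= N)%N -> q = \sum_(j < N) q`_j *: 'X^j.
Proof.
move=> H; rewrite -poly_def; apply/polyP => j; rewrite coef_poly.
by case: ltnP => // Hj; rewrite nth_default // (leq_trans H Hj).
Qed.

Lemma size_derivP g : (size g^`() <= size g)%N.
Proof.
apply/leq_sizeP => j Hj; rewrite coef_deriv nth_default ?mul0rn //.
exact: leq_trans Hj (leqnSn _).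
Qed.

Lemma pderiv_sum I (r : seq I) (P : pred I) (G : I -> {poly F}) :
  (\sum_(i <- r | P i) G i)^`() = \sum_(i <- r | P i) (G i)^`().
Proof. exact: (big_morph _ (@derivD _) (@deriv0 _)). Qed.

Lemma sum_wmulC I (r : seq I) (P : pred I) (A : I -> {poly F}) w :
  \sum_(i <- r | P i) wmul ((A i)%:P) w = wmul ((\sum_(i <- r | P i) A i)%:P) w.
Proof. by rewrite rmorph_sum wmul_suml. Qed.

Lemma part_c2 b : in_comm h Y b <->
  exists (n : nat) (c : nat -> nat -> F),
    b = \sum_(j < n | ~~ (p %| j.+1)%N) \sum_(k < n)
          wmul ((h * (c j k *: 'X^j))%:P) (wexp Y k).
Proof.
rewrite part_c1; split.
  move=> [n [g ->]].
  set N := (n + \sum_(k < n) size (g k))%N.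
  exists N, (fun j k => if (k < n)%N then (g k)`_j.+1 *+ j.+1 else 0).
  have HN : (n <= N)%N by rewrite leq_addr.
  have Hs : forall k : 'I_n, (size (g k) <= N)%N.
    by move=> k; rewrite /N (bigD1 k) //= addnCA leq_addr.
  rewrite exchange_big /=.
  rewrite (big_ord_widen N (fun i => wmul (((g i)^`() * h)%:P) (wexp Y i)) HN).
  rewrite big_mkcond /=; apply: eq_bigr => k _.
  rewrite sum_wmulC -mulr_sumr.
  case: ltnP => Hk.
    have Hs' := Hs (Ordinal Hk); rewrite /= in Hs'.
    rewrite mulrC; congr (wmul ((_ * _)%:P) _).
    rewrite (pexpN (leq_trans (size_derivP _) Hs')) [RHS]big_mkcond /=.
    apply: eq_bigr => j _; rewrite coef_deriv.
    case: ifP => // Hj; move/negbFE: Hj => Hj.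
    by rewrite mulrn_p // scale0r.
  rewrite big1 => [|j _]; last by rewrite scale0r.
  by rewrite mulr0 polyC0 wmul0l.
move=> [n [c ->]].
exists n, (fun k => \sum_(j < n | ~~ (p %| j.+1)%N) (c j k / (j.+1)%:R) *: 'X^(j.+1)).
rewrite exchange_big /=; apply: eq_bigr => k _.
rewrite sum_wmulC -mulr_sumr mulrC pderiv_sum; congr (wmul ((_ * _)%:P) _).
apply: eq_bigr => j Hj; rewrite derivZ derivXn /= -scaler_nat scalerA divfK //.
by rewrite -(dvdn_pcharf Hp).
Qed.

End Weyl.

Unset Implicit Arguments.

Theorem lemma6p3 (F : fieldType) (h : {poly F}) (hnz : h != 0) :
  (* (i) characteristic 0 *)
  ([pchar F] =i pred0 ->
     forall a : weyl F, in_CAhx h a <-> exists f : {poly F}, a = f%:P)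
  /\
  (* (ii) characteristic p > 0 *)
  (forall p : nat, p \in [pchar F] ->
     (* (a) *)
     (forall a : weyl F,
        (in_CAhx h a <->
           subalg_gen (fun b => b = wx F \/ b = (h ^+ p) *: 'X^p) a)
        /\
        (in_CAhx h a <->
           exists (n : nat) (f : nat -> {poly F}),
             a = \sum_(i < n | (p %| i)%N) (f i * h ^+ i) *: 'X^i))
     /\
     (* (b) *)
     (forall b : weyl F,
        (in_comm h (wx F) b <->
           exists (n : nat) (f : nat -> {poly F}),
             b = \sum_(i < n | ~~ (p %| i.+1)%N) (h * f i * h ^+ i) *: 'X^i)
        /\
        (in_comm h (wx F) b <->
           exists c : nat -> weyl F,
             (forall i, in_CAhx h (c i)) /\
             b = \sum_(i < p.-1) wmul (wmul h%:P (c i)) ((h ^+ i) *: 'X^i)))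
     /\
     (* (c) *)
     (forall b : weyl F,
        (in_comm h (yhat h) b <->
           exists (n : nat) (g : nat -> {poly F}),
             b = \sum_(i < n) wmul (((g i)^`() * h)%:P) (wexp (yhat h) i))
        /\
        (in_comm h (yhat h) b <->
           exists (n : nat) (c : nat -> nat -> F),
             b = \sum_(j < n | ~~ (p %| j.+1)%N) \sum_(k < n)
                   wmul ((h * (c j k *: 'X^j))%:P) (wexp (yhat h) k)))).
Proof.
split; first exact: part_i.
move=> p Hp; split.
  by move=> a; split; [exact: part_a1 | exact: part_a2].
split.
  by move=> b; split; [exact: part_b1 | exact: part_b2].
by move=> b; split; [exact: part_c1 | exact: part_c2].
Qed.
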